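(* Consider a CoMP BC under the finite-field model over $\mathbb F_q$ with connectivity matrix $\mathbf M\in\{0,*\}^{K\times B}$. Then for every prime power $q$, the NS-assisted sum-capacity satisfies $$\frac{C_\Sigma^{\mathrm{NS}}(q)}{\log_2 q}\le \operatorname{minrk}_q(\mathbf M),$$ and consequently the NS-assisted sum-DoF satisfies $d_\Sigma^{\mathrm{NS}}\le\liminf_{q\to\infty}\operatorname{minrk}_q(\mathbf M)$ (limit along prime powers).
   Context: CoMP BC, finite-field model: $B$ transmit antennas, $K$ receivers, connectivity $\mathbf M\in\{0,*\}^{K\times B}$. At use $\tau$ the transmitter sends $X^{(\tau)}\in\mathbb F_q^B$ and Rx-$k$ observes $(Y_k^{(\tau)},(G_{kj}^{(\tau)})_j)$, $Y_k^{(\tau)}=\sum_jG_{kj}^{(\tau)}X_j^{(\tau)}$; coefficients mutually independent over $k,j,\tau$ and of the messages, uniform on $\mathbb F_q^\times$ if $M_{kj}=*$, else $0$. Messages $W_k$ independent, uniform on finite $\mathcal M_k$. A $\kappa$-partite NS box is a conditional pmf of outputs given inputs (finite output alphabets) whose output marginals for any subset of parties depend only on those parties' inputs. An NS-assisted scheme is a $(K+1)$-partite NS box where the transmitter inputs $(W_1,\dots,W_K)$ and obtains the channel input sequence, and Rx-$k$ inputs its channel output sequence and obtains $\hat W_k$; joint law = uniform message pmf $\times$ box $\times$ channel. Rates are achievable if some sequence of schemes has vanishing $\max_k\Pr(\hat W_k\ne W_k)$ and $\lim\frac1n\log_2|\mathcal M_k|\ge R_k$; $C_\Sigma^{\mathrm{NS}}(q)$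 is the maximal sum of achievable rates (over the closure). A DoF tuple is achievable if for each prime power $q$ some NS-achievable rate tuple has $\lim_q R_k(q)/\log_2q\ge d_k$; $d_\Sigma^{\mathrm{NS}}$ is the maximal sum over the closure of such tuples. Min-rank: $\operatorname{minrk}_q(\mathbf M)=\min\{\mathrm{rank}(\overline{\mathbf G}):\overline{\mathbf G}\in\mathbb F_q^{K\times B},\ \overline G_{ij}=0\iff M_{ij}=0\}$. *)

(* Defs.v *)
From HB Require Import structures.
From mathcomp Require Import all_boot all_order all_algebra all_field.
From mathcomp Require Import all_classical all_reals all_analysis.
From mathcomp Require Import Rstruct Rstruct_topology.

Set Implicit Arguments.
Unset Strict Implicit.
Unset Printing Implicit Defensive.

Import Order.TTheory GRing.Theory Num.Theory.
Local Open Scope classical_set_scope.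
Local Open Scope ring_scope.

Notation Rr := Rdefinitions.R.

Definition log2 (x : Rr) : Rr := ln x / ln 2.

Definition prime_power (q : nat) : Prop :=
  exists p k : nat, prime p /\ (0 < k)%N /\ q = (p ^ k)%N.

(* Connectivity matrix: true stands for '*', false for '0'. *)
Definition fits (F : finFieldType) (K B : nat) (M : 'M[bool]_(K, B))
  (G : 'M[F]_(K, B)) : bool :=
  [forall i, forall j, (G i j == 0) == ~~ M i j].

Definition minrk (F : finFieldType) (K B : nat) (M : 'M[bool]_(K, B)) : nat :=
  \big[minn/K]_(G : 'M[F]_(K, B) | fits M G) \rank G.

Section Model.
Variables (F : finFieldType) (K B : nat) (M : 'M[bool]_(K, B)).

Definition Xseq (n : nat) := {ffun 'I_n -> {ffun 'I_B -> F}}.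
Definition Gseq (n : nat) := {ffun 'I_n -> 'M[F]_(K, B)}.
(* observation sequence of one receiver: (Y_k^(t), (G_kj^(t))_j)_t *)
Definition Obs (n : nat) := {ffun 'I_n -> (F * {ffun 'I_B -> F})%type}.
Definition Msg (m : 'I_K -> nat) := {dffun forall k : 'I_K, 'I_(m k)}.

Definition coef_pmf (b : bool) (c : F) : Rr :=
  if b then (if c != 0 then (#|F|%:R - 1)^-1 else 0)
  else (if c == 0 then 1 else 0).

Definition G_pmf (n : nat) (g : Gseq n) : Rr :=
  \prod_(t < n) \prod_(k < K) \prod_(j < B) coef_pmf (M k j) (g t k j).

Definition obs (n : nat) (g : Gseq n) (x : Xseq n) : {ffun 'I_K -> Obs n} :=
  [ffun k => [ffun t => (\sum_(j < B) g t k j * x t j, [ffun j => g t k j])]].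

(* A (K+1)-partite box: transmitter inputs w, Rx-k inputs o k;
   transmitter outputs x, Rx-k outputs wh k.  N w o x wh = P(x, wh | w, o). *)
Definition box (n : nat) (m : 'I_K -> nat) :=
  Msg m -> {ffun 'I_K -> Obs n} -> Xseq n -> Msg m -> Rr.

(* Non-signaling: for every subset of parties T = ({Tx if t} u S), the
   marginal of the outputs of T depends only on the inputs of T. *)
Definition ns_box (n : nat) (m : 'I_K -> nat) (N : box n m) : Prop :=
  [/\ (forall w o x wh, 0 <= N w o x wh),
      (forall w o, \sum_(x : Xseq n) \sum_(wh : Msg m) N w o x wh = 1) &
      (forall (t : bool) (S : {set 'I_K}) (w w' : Msg m)
              (o o' : {ffun 'I_K -> Obs n}),
          (t -> w = w') -> (forall k, k \in S -> o k = o' k) ->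
          forall (x : Xseq n) (wh : Msg m),
            \sum_(x' : Xseq n | t ==> (x' == x))
              \sum_(wh' : Msg m | [forall k in S, wh' k == wh k]) N w o x' wh'
            = \sum_(x' : Xseq n | t ==> (x' == x))
              \sum_(wh' : Msg m | [forall k in S, wh' k == wh k]) N w' o' x' wh')].

(* Pr(Wh_k <> W_k) under the joint law
   uniform message pmf x box x channel *)
Definition err_prob (n : nat) (m : 'I_K -> nat) (N : box n m) (k : 'I_K) : Rr :=
  \sum_(w : Msg m) \sum_(g : Gseq n) \sum_(x : Xseq n)
    \sum_(wh : Msg m | wh k != w k)
      (\prod_(i < K) (m i)%:R)^-1 * G_pmf g * N w (obs g x) x wh.

Definition seq_lim (u : nat -> Rr) (L : Rr) : Prop :=
  forall eps : Rr, 0 < eps -> exists i0 : nat, forall i : nat, (i0 <= i)%N ->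
    `|u i - L| < eps.

Definition ns_achievable (r : 'I_K -> Rr) : Prop :=
  exists (n : nat -> nat) (m : nat -> 'I_K -> nat)
         (N : forall i : nat, box (n i) (m i)),
    [/\ (forall i, 0 < n i)%N,
        (forall i k, 0 < m i k)%N,
        (forall i, ns_box (N i)),
        seq_lim (fun i => \big[Num.max/0]_(k < K) err_prob (N i) k) 0 &
        (forall k, exists L, seq_lim (fun i => log2 (m i k)%:R / (n i)%:R) L
                             /\ r k <= L)].

End Model.

Definition tclosure (K : nat) (A : set ('I_K -> Rr)) : set ('I_K -> Rr) :=
  [set r | forall eps : Rr, 0 < eps ->
     exists r', A r' /\ forall k, `|r k - r' k| < eps].

Definition sum_capacity_NS (F : finFieldType) (K B : nat) (M : 'M[bool]_(K, B))
  : \bar Rr :=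
  ereal_sup [set (\sum_(k < K) r k)%:E | r in tclosure (ns_achievable F M)].

Definition pp_lim (f : nat -> Rr) (L : Rr) : Prop :=
  forall eps : Rr, 0 < eps -> exists Q : nat, forall q : nat,
    (Q <= q)%N -> prime_power q -> `|f q - L| < eps.

(* Fq q is the field with q elements (for prime powers q) *)
Definition dof_achievable (Fq : nat -> finFieldType) (K B : nat)
  (M : 'M[bool]_(K, B)) (d : 'I_K -> Rr) : Prop :=
  exists Rq : nat -> 'I_K -> Rr,
    (forall q, prime_power q -> ns_achievable (Fq q) M (Rq q)) /\
    (forall k, exists L, pp_lim (fun q => Rq q k / log2 q%:R) L /\ d k <= L).

Definition sum_dof_NS (Fq : nat -> finFieldType) (K B : nat)
  (M : 'M[bool]_(K, B)) : \bar Rr :=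
  ereal_sup [set (\sum_(k < K) d k)%:E | d in tclosure (dof_achievable Fq M)].

Definition pp_liminf (f : nat -> Rr) : \bar Rr :=
  ereal_sup [set ereal_inf [set (f q)%:E | q in [set q | (Q <= q)%N /\ prime_power q]]
            | Q in [set: nat]].

(* Main.v *)
Require Import Defs.
From HB Require Import structures.
From mathcomp Require Import all_boot all_order all_algebra all_field all_fingroup.
From mathcomp Require Import all_classical all_reals all_analysis.
From mathcomp Require Import Rstruct Rstruct_topology.
Set Implicit Arguments.
Unset Strict Implicit.
Unset Printing Implicit Defensive.
Import Order.TTheory GRing.Theory Num.Theory.
Local Open Scope ring_scope.
From mathcomp Require Import ring lra.

Section Core.
Variables (F : finFieldType) (K B : nat) (M : 'M[bool]_(K, B)).

Lemma card_F_gt1 : (1 < #|F|)%N.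
Proof.
rewrite (cardD1 (0:F)) inE ltnS lt0n; apply/existsP; exists 1; by rewrite !inE oner_neq0.
Qed.

Lemma coef_sum (b : bool) : \sum_(c : F) coef_pmf b c = 1.
Proof.
rewrite /coef_pmf; case: b.
  rewrite (bigD1 0) //= eqxx add0r.
  under eq_bigr => i Hi do rewrite Hi.
  rewrite sumr_const.
  have -> : #|[pred i : F | i != 0]| = (#|F|).-1 by rewrite -(cardC1 (0:F)).
  have h1 := card_F_gt1.
  set q := #|F|.
  rewrite -(mulr_natr ((q%:R - 1)^-1)) -subn1 natrB; last by apply: ltnW.
  by rewrite mulVf // subr_eq0 pnatr_eq1 (gtn_eqF h1).
rewrite (bigD1 0) //= eqxx big1 ?addr0 //.
by move=> i /negbTE ->.
Qed.

Lemma coef_ge0 b (c : F) : 0 <= coef_pmf b c.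
Proof.
rewrite /coef_pmf; case: b; case: ifP => // _.
rewrite invr_ge0 subr_ge0 ler1n; apply: ltnW; exact: card_F_gt1.
Qed.

Lemma G_pmf_ge0 n (g : Gseq F K B n) : 0 <= G_pmf M g.
Proof. by apply: prodr_ge0 => t _; apply: prodr_ge0 => k _; apply: prodr_ge0 => j _; exact: coef_ge0. Qed.

Lemma sum_mat (h : 'I_K -> 'I_B -> F -> Rr) :
  \sum_(A : 'M[F]_(K, B)) \prod_i \prod_j h i j (A i j) =
  \prod_i \prod_j \sum_c h i j c.
Proof.
under [RHS]eq_bigr => i _ do rewrite bigA_distr_bigA /=.
rewrite bigA_distr_bigA /=.
rewrite (reindex (fun A : 'M[F]_(K,B) => [ffun i => [ffun j => A i j]])) /=.
  by apply: eq_bigr => A _; apply: eq_bigr => i _; apply: eq_bigr => j _; rewrite !ffunE.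
exists (fun f : {ffun 'I_K -> {ffun 'I_B -> F}} => \matrix_(i, j) f i j).
  by move=> A _; apply/matrixP => i j; rewrite mxE !ffunE.
by move=> f _; apply/ffunP => i; apply/ffunP => j; rewrite !ffunE mxE.
Qed.

Lemma G_pmf_sum n : \sum_(g : Gseq F K B n) G_pmf M g = 1.
Proof.
rewrite /G_pmf.
rewrite -(bigA_distr_bigA (fun (t : 'I_n) (A : 'M[F]_(K,B)) => \prod_(k < K) \prod_(j < B) coef_pmf (M k j) (A k j))) /=.
rewrite big1 // => t _.
rewrite (sum_mat (fun i j c => coef_pmf (M i j) c)) big1 // => i _; rewrite big1 // => j _; exact: coef_sum.
Qed.

End Core.

Section NS.
Variables (F : finFieldType) (K B : nat) (n : nat) (m : 'I_K -> nat).
Variable (N : box F B n m).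
Hypothesis HN : ns_box N.

Lemma ns_ge0 w o x wh : 0 <= N w o x wh.
Proof. by case: HN. Qed.

Lemma ns_tx w (o o' : {ffun 'I_K -> Obs F B n}) (x : Xseq F B n) :
  \sum_(wh : Msg m) N w o x wh = \sum_(wh : Msg m) N w o' x wh.
Proof.
case: (pickP (@predT (Msg m))) => [wh0 _ | hnone]; last first.
  by rewrite !big_pred0.
case: HN => _ _ /(_ true finset.set0 w w o o' (fun _ => erefl) (fun k => ltac:(by rewrite inE)) x wh0).
rewrite /= !big_pred1_eq.
have E : forall wh' : Msg m, [forall k in finset.set0, wh' k == wh0 k] = true.
  by move=> wh'; apply/forall_inP => k; rewrite inE.
by rewrite !(eq_bigl _ _ E).
Qed.

Lemma ns_rx (w w' : Msg m) o wh :
  \sum_(x : Xseq F B n) N w o x wh = \sum_(x : Xseq F B n) N w' o x wh.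
Proof.
set x0 : Xseq F B n := [ffun _ => [ffun _ => 0]].
case: HN => _ _ /(_ false [set: 'I_K] w w' o o (fun h => ltac:(by [])) (fun _ _ => erefl) x0 wh).
have E : forall wh' : Msg m, [forall k in [set: 'I_K], wh' k == wh k] = (wh' == wh).
  move=> wh'; apply/forall_inP/eqP => [h|-> //]; apply/ffunP => k.
  by apply/eqP; apply: h; rewrite inE.
rewrite /=.
under eq_bigr => x' _ do rewrite (eq_bigl _ _ E) big_pred1_eq.
move=> ->.
by under eq_bigr => x' _ do rewrite (eq_bigl _ _ E) big_pred1_eq.
Qed.

Lemma ns_row k (w : Msg m) (o o' : {ffun 'I_K -> Obs F B n}) (x : Xseq F B n) :
  o k = o' k ->
  \sum_(wh : Msg m | wh k == w k) N w o x wh = \sum_(wh : Msg m | wh k == w k) N w o' x wh.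
Proof.
move=> ok.
have hS : forall k', k' \in [set k] -> o k' = o' k' by move=> k'; rewrite inE => /eqP ->.
case: HN => _ _ /(_ true [set k] w w o o' (fun _ => erefl) hS x w).
have E : forall wh' : Msg m, [forall k' in [set k], wh' k' == w k'] = (wh' k == w k).
  move=> wh'; apply/forall_inP/idP => [h|h k']; first by apply: h; rewrite inE.
  by rewrite inE => /eqP ->.
by rewrite /= !big_pred1_eq !(eq_bigl _ _ E).
Qed.

Lemma ns_tot w (o : {ffun 'I_K -> Obs F B n}) (f : Xseq F B n -> {ffun 'I_K -> Obs F B n}) :
  \sum_(x : Xseq F B n) \sum_(wh : Msg m) N w (f x) x wh = 1.
Proof.
case: HN => _ H1 _; rewrite -(H1 w o).
by apply: eq_bigr => x _; apply: ns_tx.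
Qed.

End NS.

Section Coupling.
Variables (F : finFieldType) (K B : nat) (M : 'M[bool]_(K, B)).
Variable (Gb : 'M[F]_(K, B)).
Hypothesis Gfit : fits M Gb.
Variable n : nat.

Lemma fitsP i j : (Gb i j == 0) = ~~ M i j.
Proof. by move: Gfit => /forallP /(_ i) /forallP /(_ j) /eqP. Qed.

Lemma coef_scale b (s x : F) : s != 0 -> coef_pmf b (s * x) = coef_pmf b x.
Proof. by move=> s0; rewrite /coef_pmf mulf_eq0 (negbTE s0). Qed.

Definition cc (g : Gseq F K B n) t j : F :=
  if [pick i | M i j] is Some i then g t i j / Gb i j else 0.

Definition gp (g : Gseq F K B n) : Gseq F K B n :=
  [ffun t => \matrix_(i, j) (Gb i j * cc g t j)].

Definition phi (k : 'I_K) (g : Gseq F K B n) : Gseq F K B n :=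
  [ffun t => \matrix_(i, j)
     if M k j then
       (if [pick i0 | M i0 j] is Some i0 then
          (if i == k then Gb k j / Gb i0 j * g t i0 j
           else if i == i0 then Gb i0 j / Gb k j * g t k j
           else g t i j)
        else g t i j)
     else g t i j].

Lemma divK2 (a b x : F) : a != 0 -> b != 0 -> a / b * (b / a * x) = x.
Proof. by move=> ha hb; field; rewrite ha hb. Qed.

Lemma pick_some j i0 : [pick i | M i j] = Some i0 -> M i0 j.
Proof. by case: pickP => // x Mx [<-]. Qed.

Lemma pick_none j k : [pick i | M i j] = None -> M k j = false.
Proof. by case: pickP => // /(_ k) ->. Qed.

Lemma phiK k : involutive (phi k).
Proof.
move=> g; apply/ffunP => t; apply/matrixP => i j; rewrite /phi !(ffunE, mxE).
case Mkj: (M k j) => //.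
case hp: [pick i | M i j] => [i0|]; last by rewrite (pick_none k hp) in Mkj.
have Mi0 := pick_some hp.
rewrite !mxE Mkj hp.
have nk : Gb k j != 0 by rewrite fitsP Mkj.
have n0 : Gb i0 j != 0 by rewrite fitsP Mi0.
rewrite !eqxx.
case: (i =P k) => [->|nik].
  by case: (i0 =P k) => [->|_]; rewrite divK2.
by case: (i =P i0) => [->|nii0] //; rewrite divK2.
Qed.

Lemma G_pmf_phi k g : G_pmf M (phi k g) = G_pmf M g.
Proof.
rewrite /G_pmf; apply: eq_bigr => t _.
rewrite exchange_big [RHS]exchange_big; apply: eq_bigr => j _ /=.
rewrite ffunE; under eq_bigr => i _ do rewrite mxE.
case Mkj: (M k j) => //.
case: pickP => [i0 Mi0|/(_ k)]; last by rewrite Mkj.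
have nk : Gb k j != 0 by rewrite fitsP Mkj.
have n0 : Gb i0 j != 0 by rewrite fitsP Mi0.
rewrite [RHS](reindex_inj (@perm_inj _ (tperm k i0))) /=.
apply: eq_bigr => i _.
case: tpermP => [->|->|nik nii0].
- rewrite eqxx coef_scale ?Mkj ?Mi0 //.
  by rewrite mulf_neq0 // invr_neq0.
- case: (i0 =P k) => [e|_].
    by rewrite -e coef_scale // mulf_neq0 // invr_neq0.
  rewrite eqxx coef_scale ?Mkj ?Mi0 //.
  by rewrite mulf_neq0 // invr_neq0.
- by case: (i =P k) => // _; case: (i =P i0).
Qed.

Lemma G_pmf_supp (g : Gseq F K B n) t i j : G_pmf M g != 0 -> ~~ M i j -> g t i j = 0.
Proof.
move=> nz nM; apply/eqP; apply: contraNT nz => gnz.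
rewrite /G_pmf (bigD1 t) //= (bigD1 i) //= (bigD1 j) //=.
by rewrite /coef_pmf (negbTE nM) (negbTE gnz) !mul0r.
Qed.

Lemma row_eq k (g : Gseq F K B n) : G_pmf M g != 0 -> forall t j, phi k g t k j = gp g t k j.
Proof.
move=> nz t j; rewrite !ffunE !mxE /cc.
case Mkj: (M k j).
  case: pickP => [i0 Mi0|/(_ k)]; last by rewrite Mkj.
  by rewrite eqxx; ring.
have: Gb k j == 0 by rewrite fitsP Mkj.
by move/eqP => ->; rewrite mul0r (@G_pmf_supp g t k j nz) ?Mkj.
Qed.

End Coupling.

Section Main.
Variables (F : finFieldType) (K B : nat) (M : 'M[bool]_(K, B)).
Variable (Gb : 'M[F]_(K, B)).
Hypothesis Gfit : fits M Gb.
Variables (n : nat) (m : 'I_K -> nat) (N : box F B n m).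
Hypothesis HN : ns_box N.

Definition Sk k (w : Msg m) (g : Gseq F K B n) :=
  \sum_(x : Xseq F B n) \sum_(wh : Msg m | wh k == w k) N w (obs g x) x wh.

Lemma Sk_row k w (g g2 : Gseq F K B n) :
  (forall t j, g t k j = g2 t k j) -> Sk k w g = Sk k w g2.
Proof.
move=> H; apply: eq_bigr => x _; apply: ns_row => //.
rewrite /obs !ffunE; apply/ffunP => t; rewrite !ffunE; congr pair.
  by apply: eq_bigr => j _; rewrite H.
by apply/ffunP => j; rewrite !ffunE H.
Qed.

Lemma stepB k w :
  \sum_(g : Gseq F K B n) G_pmf M g * Sk k w g =
  \sum_(g : Gseq F K B n) G_pmf M g * Sk k w (gp M Gb g).
Proof.
rewrite (reindex_inj (can_inj (phiK Gfit k))) /=.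
apply: eq_bigr => g _; rewrite G_pmf_phi //.
case: (eqVneq (G_pmf M g) 0) => [->|nz]; first by rewrite !mul0r.
congr (_ * _); apply: Sk_row => t j; exact: row_eq.
Qed.


Definition Yt := {ffun 'I_n -> {ffun 'I_(\rank Gb) -> F}}.

Definition uu (g0 : Gseq F K B n) (x : Xseq F B n) : Yt :=
  [ffun t => [ffun l => \sum_j row_base Gb l j * (cc M Gb g0 t j * x t j)]].

Definition Phi (g0 : Gseq F K B n) (y : Yt) : {ffun 'I_K -> Obs F B n} :=
  [ffun k => [ffun t => (\sum_l col_base Gb k l * y t l, [ffun j => gp M Gb g0 t k j])]].

Lemma obs_gp g0 x : obs (gp M Gb g0) x = Phi g0 (uu g0 x).
Proof.
have hG : forall i j, Gb i j = \sum_l col_base Gb i l * row_base Gb l j.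
  by move=> i j; rewrite -{1}(mulmx_base Gb) mxE.
apply/ffunP => k; rewrite !ffunE; apply/ffunP => t; rewrite !ffunE; congr pair.
transitivity (\sum_j \sum_l col_base Gb k l * (row_base Gb l j * (cc M Gb g0 t j * x t j))).
  apply: eq_bigr => j _; rewrite mxE hG !big_distrl /=.
  by apply: eq_bigr => l _; rewrite !mulrA.
rewrite exchange_big; apply: eq_bigr => l _; rewrite !ffunE big_distrr.
by [].
Qed.

Lemma rx_le1 o : \sum_(w : Msg m) \sum_(x : Xseq F B n) N w o x w <= 1.
Proof.
case: (pickP (@predT (Msg m))) => [w0 _|hnone]; last by rewrite big_pred0 // ler01.
under eq_bigr => w _ do rewrite (ns_rx HN w w0).
rewrite exchange_big; case: HN => _ H1 _; by rewrite H1.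
Qed.

Lemma sum_J_le g0 :
  \sum_(w : Msg m) \sum_(x : Xseq F B n) N w (obs (gp M Gb g0) x) x w
    <= (#|F| ^ (\rank Gb * n))%:R.
Proof.
have E1 : forall w, \sum_(x : Xseq F B n) N w (obs (gp M Gb g0) x) x w =
    \sum_(y : Yt) \sum_(x : Xseq F B n | uu g0 x == y) N w (Phi g0 y) x w.
  move=> w; rewrite (partition_big (uu g0) predT) //=.
  apply: eq_bigr => y _; apply: eq_bigr => x /eqP <-; by rewrite obs_gp.
under eq_bigr => w _ do rewrite E1.
apply: (@le_trans _ _ (\sum_(w : Msg m) \sum_(y : Yt) \sum_(x : Xseq F B n) N w (Phi g0 y) x w)).
  apply: ler_sum => w _; apply: ler_sum => y _.
  rewrite [X in _ <= X](bigID (fun x => uu g0 x == y)) /= lerDl.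
  by apply: sumr_ge0 => x _; apply: ns_ge0.
rewrite exchange_big /=.
apply: (@le_trans _ _ (\sum_(y : Yt) 1)).
  by apply: ler_sum => y _; apply: rx_le1.
by rewrite sumr_const card_ffun card_ffun !card_ord -expnM mulnC.
Qed.


Lemma bonf (w wh : Msg m) :
  \sum_(k < K) ((wh k == w k)%:R : Rr) <= K%:R - 1 + (wh == w)%:R.
Proof.
have hK : \sum_(k < K) (1 : Rr) = K%:R by rewrite sumr_const card_ord.
case: (eqVneq wh w) => [->|ne].
  under eq_bigr => k _ do rewrite eqxx.
  by rewrite hK subrK.
case/boolP: [forall k, wh k == w k] => [/forallP h|/forallPn [k hk]].
  by case/eqP: ne; apply/ffunP => k; apply/eqP.
rewrite addr0 (bigD1 k) //= (negbTE hk) add0r.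
move: hK; rewrite (bigD1 k) //= => hK.
have -> : K%:R - 1 = \sum_(i < K | i != k) (1 : Rr) by rewrite -hK addrC addrK.
by apply: ler_sum => i _; case: (_ == _).
Qed.

Lemma Sk_sum_le w (g : Gseq F K B n) :
  \sum_(k < K) Sk k w g <= K%:R - 1 + \sum_(x : Xseq F B n) N w (obs g x) x w.
Proof.
have -> : \sum_(k < K) Sk k w g = (\sum_(x : Xseq F B n) \sum_(wh : Msg m)
     (\sum_(k < K) ((wh k == w k)%:R : Rr)) * N w (obs g x) x wh).
  rewrite /Sk exchange_big /=; apply: eq_bigr => x _.
  under eq_bigr => k _ do rewrite big_mkcond /=.
  rewrite exchange_big /=; apply: eq_bigr => wh _; rewrite big_distrl /=.
  by apply: eq_bigr => k _; case: (_ == _); rewrite ?mul1r ?mul0r.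
apply: (@le_trans _ _ (\sum_(x : Xseq F B n) \sum_(wh : Msg m)
     (K%:R - 1 + (wh == w)%:R) * N w (obs g x) x wh)).
  apply: ler_sum => x _; apply: ler_sum => wh _.
  by apply: ler_wpM2r; [apply: ns_ge0 | apply: bonf].
under eq_bigr => x _ do (under eq_bigr => wh _ do rewrite mulrDl; rewrite big_split /= -big_distrr /=).
rewrite big_split /= -big_distrr /= (ns_tot HN w (obs g [ffun _ => [ffun _ => 0]]) (obs g)) mulr1.
rewrite lerD2l le_eqVlt; apply/orP; left; apply/eqP; apply: eq_bigr => x _.
rewrite (bigD1 w) //= eqxx mul1r big1 ?addr0 //.
by move=> wh /negbTE ->; rewrite mul0r.
Qed.


Lemma card_Msg : ((#|Msg m|)%:R : Rr) = \prod_(i < K) ((m i)%:R : Rr).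
Proof.
rewrite card_dep_ffun -natr_prod; congr (_%:R).
have -> : \prod_(i < K) m i = \prod_(i <- enum 'I_K) #|'I_(m i)|.
  by rewrite big_enum /=; apply: eq_bigr => i _; rewrite card_ord.
rewrite /image_mem; elim: (enum _) => [|a s IH] /=; first by rewrite big_nil.
by rewrite big_cons IH.
Qed.

Lemma compl k (w : Msg m) (g : Gseq F K B n) :
  \sum_(x : Xseq F B n) \sum_(wh : Msg m | wh k != w k) N w (obs g x) x wh = 1 - Sk k w g.
Proof.
rewrite /Sk -(ns_tot HN w (obs g [ffun _ => [ffun _ => 0]]) (obs g)) -sumrB.
apply: eq_bigr => x _.
by rewrite [X in _ = X - _](bigID (fun wh : Msg m => wh k == w k)) /= addrC addrK.
Qed.

Lemma err_eq k : (0 < #|Msg m|)%N ->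
  err_prob M N k = 1 - (#|Msg m|%:R)^-1 *
     \sum_(w : Msg m) \sum_(g : Gseq F K B n) G_pmf M g * Sk k w g.
Proof.
move=> hpos.
rewrite /err_prob -card_Msg.
set c := (#|Msg m|%:R)^-1.
have -> : \sum_(w : Msg m) \sum_(g : Gseq F K B n) \sum_(x : Xseq F B n)
     \sum_(wh : Msg m | wh k != w k) c * G_pmf M g * N w (obs g x) x wh
   = \sum_(w : Msg m) \sum_(g : Gseq F K B n) (c * G_pmf M g - c * (G_pmf M g * Sk k w g)).
  apply: eq_bigr => w _; apply: eq_bigr => g _.
  under eq_bigr => x _ do rewrite -big_distrr /=.
  by rewrite -big_distrr /= compl mulrBr mulr1 mulrA.
under eq_bigr => w _ do rewrite sumrB -!big_distrr /= G_pmf_sum mulr1.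
rewrite sumrB -big_distrr /= sumr_const.
rewrite -[c *+ _]mulr_natr /c mulVf // pnatr_eq0 -lt0n //.
Qed.

Lemma main_bound : (0 < #|Msg m|)%N ->
  1 - (#|F| ^ (\rank Gb * n))%:R / (#|Msg m|)%:R <= \sum_(k < K) err_prob M N k.
Proof.
move=> hpos.
set c := (#|Msg m|%:R : Rr)^-1.
set Q := ((#|F| ^ (\rank Gb * n))%:R : Rr).
have cpos : 0 < c by rewrite invr_gt0 ltr0n.
under eq_bigr => k _ do rewrite err_eq //.
rewrite sumrB sumr_const card_ord -big_distrr /=.
under eq_bigr => k _ do (under eq_bigr => w _ do rewrite stepB).
have H : \sum_(k < K) \sum_(w : Msg m) \sum_(g : Gseq F K B n) G_pmf M g * Sk k w (gp M Gb g)
   <= (K%:R - 1) * #|Msg m|%:R + Q.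
  rewrite exchange_big /=.
  under eq_bigr => w _ do rewrite exchange_big /=.
  apply: (@le_trans _ _ (\sum_(w : Msg m) \sum_(g : Gseq F K B n) G_pmf M g *
        (K%:R - 1 + \sum_(x : Xseq F B n) N w (obs (gp M Gb g) x) x w))).
    apply: ler_sum => w _; apply: ler_sum => g _; rewrite -big_distrr /=.
    by apply: ler_wpM2l; [apply: G_pmf_ge0 | apply: Sk_sum_le].
  under eq_bigr => w _ do (under eq_bigr => g _ do rewrite mulrDr; rewrite big_split /= -big_distrl /= G_pmf_sum mul1r).
  rewrite big_split /= sumr_const mulr_natr lerD2l.
  rewrite exchange_big /=.
  apply: (@le_trans _ _ (\sum_(g : Gseq F K B n) G_pmf M g * Q)).
    apply: ler_sum => g _; rewrite -big_distrr /=.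
    by apply: ler_wpM2l; [apply: G_pmf_ge0 | apply: sum_J_le].
  by rewrite -big_distrl /= G_pmf_sum mul1r.
set S := \sum_(k < K) _ in H *.
have hcD : c * #|Msg m|%:R = 1 by rewrite /c mulVf // pnatr_eq0 -lt0n.
have h2 : c * S <= (K%:R - 1) + Q * c.
  apply: le_trans (ler_wpM2l (ltW cpos) H) _.
  by rewrite mulrDr mulrCA hcD mulr1 (mulrC c).
rewrite -[Q / _]/(Q * c).
rewrite -/c; lra.
Qed.

End Main.

Section Asym.
Variables (F : finFieldType) (K B : nat) (M : 'M[bool]_(K, B)).

Lemma exists_fit : exists2 Gb : 'M[F]_(K, B), fits M Gb & (\rank Gb <= minrk F M)%N.
Proof.
rewrite /minrk; apply: (big_ind (fun v => exists2 Gb : 'M[F]_(K, B), fits M Gb & (\rank Gb <= v)%N)).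
- exists (\matrix_(i, j) (if M i j then 1 else 0)); last exact: rank_leq_row.
  apply/forallP => i; apply/forallP => j; rewrite mxE; case: (M i j) => /=.
    by rewrite oner_eq0.
  by rewrite eqxx.
- move=> a b [G1 h1 r1] [G2 h2 r2]; rewrite /minn; case: ifP => _.
    by exists G1.
  by exists G2.
- by move=> G fG; exists G.
Qed.

Lemma le_bigmax_seq (s : seq 'I_K) (f : 'I_K -> Rr) k :
  k \in s -> f k <= \big[Num.max/0]_(i <- s) f i.
Proof.
elim: s => // a s IH; rewrite inE big_cons => /orP [/eqP ->|/IH h].
  by rewrite le_max lexx.
by rewrite le_max h orbT.
Qed.

Lemma bigmax_ge0_seq (s : seq 'I_K) (f : 'I_K -> Rr) :
  0 <= \big[Num.max/0]_(i <- s) f i.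
Proof.
elim: s => [|a s IH]; first by rewrite big_nil.
by rewrite big_cons le_max IH orbT.
Qed.

Lemma le_bigmax0 (f : 'I_K -> Rr) k : f k <= \big[Num.max/0]_(i < K) f i.
Proof. by apply: le_bigmax_seq; rewrite mem_index_enum. Qed.

Lemma bigmax0_ge0 (f : 'I_K -> Rr) : 0 <= \big[Num.max/0]_(i < K) f i.
Proof. exact: bigmax_ge0_seq. Qed.

Lemma ln_prod (s : seq 'I_K) (f : 'I_K -> Rr) :
  (forall i, 0 < f i) -> ln (\prod_(i <- s) f i) = \sum_(i <- s) ln (f i).
Proof.
move=> hf; elim: s => [|a s IH]; first by rewrite !big_nil ln1.
rewrite !big_cons lnM ?IH // posrE //.
by apply: prodr_gt0 => i _.
Qed.

Lemma card_bound n m (N : box F B n m) : ns_box N -> (forall k, 0 < m k)%N ->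
  K%:R * \big[Num.max/0]_(k < K) err_prob M N k <= 1/2 ->
  \sum_(k < K) ln ((m k)%:R) <= (minrk F M * n)%:R * ln (#|F|%:R)
     + 2 * (K%:R * \big[Num.max/0]_(k < K) err_prob M N k).
Proof.
move=> HN mpos.
set e := \big[Num.max/0]_(k < K) err_prob M N k => he.
have e0 : 0 <= e := bigmax0_ge0 _.
have [Gb fG rG] := exists_fit.
have Dpos : 0 < (#|Msg m|%:R : Rr).
  by rewrite card_Msg; apply: prodr_gt0 => i _; rewrite ltr0n.
have hpos : (0 < #|Msg m|)%N by rewrite -(ltr0n Rr).
have hmb := main_bound fG HN hpos.
have hse : \sum_(k < K) err_prob M N k <= K%:R * e.
  apply: (@le_trans _ _ (\sum_(k < K) e)).
    by apply: ler_sum => k _; exact: le_bigmax0.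
  by rewrite sumr_const card_ord mulr_natl.
set Q := ((#|F| ^ (\rank Gb * n))%:R : Rr) in hmb.
set D := (#|Msg m|%:R : Rr) in Dpos hmb.
have q1 : (1 < #|F|)%N := card_F_gt1 F.
have Qpos : 0 < Q by rewrite ltr0n expn_gt0 ltnW.
have h1 : 1 - Q / D <= K%:R * e := le_trans hmb hse.
have h2 : 1/2 <= Q / D by lra.
have h3 : D / Q <= 2.
  rewrite ler_pdivlMr // in h2; rewrite ler_pdivrMr //; lra.
have aP : 0 < D / Q by rewrite divr_gt0.
have bP : 0 < Q / D by rewrite divr_gt0.
have ab : D / Q * (Q / D) = 1 by rewrite -invf_div mulVf // gt_eqF.
have Ke0 : 0 <= K%:R * e by rewrite mulr_ge0.
have h4 : D / Q - 1 <= 2 * (K%:R * e).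
  have c1 : D / Q * (1 - Q / D) <= D / Q * (K%:R * e) by apply: ler_wpM2l; [apply: ltW|].
  have c2 : D / Q * (K%:R * e) <= 2 * (K%:R * e) by apply: ler_wpM2r.
  rewrite mulrBr mulr1 ab in c1; lra.
have h5 : ln (D / Q) <= D / Q - 1.
  have H := @le_ln1Dx _ (D / Q - 1).
  rewrite (_ : 1 + (D / Q - 1) = D / Q) in H; last by rewrite addrC subrK.
  apply: H; rewrite ltrBrDl.
  have : 0 < D / Q by rewrite divr_gt0.
  lra.
have lnD : ln D = \sum_(k < K) ln ((m k)%:R).
  by rewrite /D card_Msg ln_prod // => i; rewrite ltr0n.
have lnQ : ln Q <= (minrk F M * n)%:R * ln (#|F|%:R).
  rewrite /Q natrX lnXn ?ltr0n ?(ltnW q1) // -[ln _ *+ _]mulr_natl.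
  apply: ler_wpM2r; first by apply: ln_ge0; rewrite ler1n ltnW.
  by rewrite ler_nat leq_mul2r rG orbT.
have : ln (D / Q) = ln D - ln Q by rewrite ln_div // posrE.
lra.
Qed.


Lemma absP (x y e : Rr) : `|x - y| < e -> y < x + e /\ x < y + e.
Proof. by rewrite ltr_norml => /andP [h1 h2]; split; lra. Qed.

Lemma rate_le r : ns_achievable F M r ->
  \sum_(k < K) r k <= (minrk F M)%:R * log2 (#|F|%:R).
Proof.
case=> n [m [N [npos mpos nsN lim rates]]].
have [L HL] := fin_all_exists rates.
apply: (@le_trans _ _ (\sum_(k < K) L k)); first by apply: ler_sum => k _; case: (HL k).
set c := (minrk F M)%:R * log2 (#|F|%:R).
apply/ler_addgt0Pr => d dpos.
have K1 : 0 < K%:R + 1 :> Rr by rewrite ltr_pwDr // ler0n.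
set eta := d / (K%:R + 1).
have etapos : 0 < eta by rewrite divr_gt0.
have l2 : 0 < ln 2 :> Rr by apply: ln_gt0; lra.
have H0 : forall k, exists i0 : nat, forall i, (i0 <= i)%N ->
    `|log2 (m i k)%:R / (n i)%:R - L k| < eta.
  by move=> k; case: (HL k) => hl _; exact: hl.
have [I0 HI0] := fin_all_exists H0.
set eps := Num.min (1 / (2 * (K%:R + 1))) (eta * ln 2 / (2 * (K%:R + 1))).
have epspos : 0 < eps by rewrite lt_min !divr_gt0 ?mulr_gt0 //; lra.
have [i1 Hi1] := lim eps epspos.
set i := (i1 + \sum_(k < K) I0 k)%N.
have hi1 : (i1 <= i)%N by rewrite leq_addr.
have hik : forall k, (I0 k <= i)%N.
  move=> k; rewrite /i (bigD1 k) //= addnCA leq_addr //.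
set e := \big[Num.max/0]_(k < K) err_prob M (N i) k.
have e0 : 0 <= e := bigmax0_ge0 _.
have elt : e < eps by have := Hi1 i hi1; rewrite subr0 ger0_norm.
have eb1 : K%:R * e <= 1/2.
  have : e < 1 / (2 * (K%:R + 1)) by apply: lt_le_trans elt _; rewrite ge_min lexx.
  have : 0 <= K%:R * e by rewrite mulr_ge0.
  rewrite ltr_pdivlMr ?mulr_gt0 //; lra.
have eb2 : 2 * (K%:R * e) <= eta * ln 2.
  have : e < eta * ln 2 / (2 * (K%:R + 1)) by apply: lt_le_trans elt _; rewrite ge_min lexx orbT.
  have : 0 <= K%:R * e by rewrite mulr_ge0.
  rewrite ltr_pdivlMr ?mulr_gt0 //; lra.
have cb := card_bound (nsN i) (mpos i) eb1.
rewrite -/e in cb.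
have hL : \sum_(k < K) L k <= \sum_(k < K) (log2 (m i k)%:R / (n i)%:R + eta).
  apply: ler_sum => k _; have [h _] := absP (HI0 k i (hik k)); exact: ltW.
rewrite big_split /= sumr_const card_ord in hL.
have nu1 : 1 <= (n i)%:R :> Rr by rewrite ler1n npos.
have ha : \sum_(k < K) log2 (m i k)%:R / (n i)%:R <= c + eta.
  have -> : \sum_(k < K) log2 (m i k)%:R / (n i)%:R =
      (\sum_(k < K) ln (m i k)%:R) / (ln 2 * (n i)%:R).
    rewrite /log2 big_distrl /=; apply: eq_bigr => k _.
    by rewrite -mulrA -invfM.
  rewrite ler_pdivrMr ?mulr_gt0 //; last lra.
  have hc : c * (ln 2 * (n i)%:R) = (minrk F M)%:R * (n i)%:R * ln (#|F|%:R).
    rewrite /c /log2; field; rewrite gt_eqF //.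
  rewrite mulrDl hc; rewrite natrM in cb.
  have : eta * ln 2 <= eta * (ln 2 * (n i)%:R).
    by apply: ler_wpM2l; [apply: ltW | rewrite ler_peMr // ltW].
  lra.
have hd : d = eta * (K%:R + 1) by rewrite /eta divfK // gt_eqF.
rewrite hd; rewrite -[eta *+ K]mulr_natr in hL.
lra.
Qed.

End Asym.


Lemma tclosure_le K (A : set ('I_K -> Rr)) (c : Rr) :
  (forall r, A r -> \sum_(k < K) r k <= c) ->
  forall r, tclosure A r -> \sum_(k < K) r k <= c.
Proof.
move=> hA r hr; apply/ler_addgt0Pr => e epos.
have K1 : 0 < K%:R + 1 :> Rr by rewrite ltr_pwDr // ler0n.
have [r' [Ar' hr']] := hr (e / (K%:R + 1)) (divr_gt0 epos K1).
have h1 : \sum_(k < K) r k <= \sum_(k < K) (r' k + e / (K%:R + 1)).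
  apply: ler_sum => k _; have := hr' k; rewrite ltr_norml => /andP [_ h]; lra.
rewrite big_split /= sumr_const card_ord -[_ *+ K]mulr_natr in h1.
have h2 := hA r' Ar'.
have h3 : e / (K%:R + 1) * K%:R <= e.
  rewrite mulrAC ler_pdivrMr // ler_wpM2l ?(ltW epos) //; lra.
lra.
Qed.

Lemma log2_gt0 (q : nat) : (1 < q)%N -> 0 < log2 q%:R.
Proof.
move=> hq; rewrite /log2 divr_gt0 //; apply: ln_gt0; last lra.
by rewrite ltr1n.
Qed.

Local Open Scope ereal_scope.

Theorem part1 (K B : nat) (M : 'M[bool]_(K, B)) (F : finFieldType) :
  sum_capacity_NS F M * ((log2 (#|F|%:R))^-1)%:E <= ((minrk F M)%:R)%:E.
Proof.
have lpos := log2_gt0 (card_F_gt1 F).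
set c := ((minrk F M)%:R * log2 (#|F|%:R))%R.
have hs : sum_capacity_NS F M <= c%:E.
  apply: ge_ereal_sup => _ [r hr <-]; rewrite lee_fin.
  exact: (tclosure_le (@rate_le F K B M) hr).
apply: le_trans (lee_wpmul2r _ hs) _; first by rewrite lee_fin invr_ge0 ltW.
by rewrite -EFinM lee_fin /c -mulrA mulfV ?gt_eqF // mulr1.
Qed.

Lemma pp_gt1 q : prime_power q -> (1 < q)%N.
Proof.
case=> p [k [pp [k0 ->]]].
apply: (leq_trans (prime_gt1 pp)); rewrite -{1}(expn1 p) leq_pexp2l //.
exact: prime_gt0.
Qed.

Section Part2.
Variables (K B : nat) (M : 'M[bool]_(K, B)) (Fq : nat -> finFieldType).
Hypothesis hc : forall q : nat, prime_power q -> #|Fq q| = q.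
Let f := fun q => ((minrk (Fq q) M)%:R : Rdefinitions.R).

Lemma dof_le d : dof_achievable Fq M d -> forall e : Rr, (0 < e)%R ->
  ((\sum_(k < K) d k) - e)%:E <= pp_liminf f.
Proof.
move=> [Rq [hach hlim]] e epos.
have [L HL] := fin_all_exists hlim.
have K1 : (0 < K%:R + 1 :> Rr)%R by rewrite ltr_pwDr // ler0n.
set eta := (e / (K%:R + 1))%R.
have etapos : (0 < eta)%R by rewrite divr_gt0.
have H0 : forall k, exists Q : nat, forall q : nat, (Q <= q)%N -> prime_power q ->
    (`|Rq q k / log2 q%:R - L k| < eta)%R.
  by move=> k; case: (HL k) => hl _; exact: hl.
have [Q0 HQ0] := fin_all_exists H0.
set Q := (\sum_(k < K) Q0 k)%N.
have hQk : forall k, (Q0 k <= Q)%N.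
  by move=> k; rewrite /Q (bigD1 k) //= leq_addr.
apply: (@le_trans _ _ (ereal_inf [set (f q)%:E | q in [set q | (Q <= q)%N /\ prime_power q]])).
  apply/ereal_infP => _ [q [hq ppq] <-]; rewrite lee_fin.
  have h := rate_le (hach q ppq); rewrite hc // in h.
  have lq := log2_gt0 (pp_gt1 ppq).
  have hL : (\sum_(k < K) d k <= \sum_(k < K) (Rq q k / log2 q%:R + eta))%R.
    apply: ler_sum => k _; case: (HL k) => _ dk.
    have := HQ0 k q (leq_trans (hQk k) hq) ppq; rewrite ltr_norml => /andP [h1 _].
    lra.
  have hse : (\sum_(k < K) eta = eta * K%:R)%R by rewrite sumr_const card_ord mulr_natr.
  rewrite big_split /= hse -big_distrl /= in hL.
  have h2 : ((\sum_(k < K) Rq q k) / log2 q%:R <= f q)%R.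
    by rewrite ler_pdivrMr.
  have h3 : (eta * K%:R <= e)%R.
    rewrite /eta mulrAC ler_pdivrMr // ler_wpM2l ?(ltW epos) //; lra.
  lra.
apply: ereal_sup_ubound; exists Q => //.
Qed.


Lemma part2 : sum_dof_NS Fq M <= pp_liminf f.
Proof.
apply: ge_ereal_sup => _ [d hd <-].
apply/lee_addgt0Pr => e epos.
have K1 : (0 < K%:R + 1 :> Rr)%R by rewrite ltr_pwDr // ler0n.
have e2 : (0 < e / 2)%R by rewrite divr_gt0.
have [d' [ad' hd']] := hd (e / 2 / (K%:R + 1))%R (divr_gt0 e2 K1).
have h1 : (\sum_(k < K) d k <= \sum_(k < K) (d' k + e / 2 / (K%:R + 1)))%R.
  apply: ler_sum => k _; have := hd' k; rewrite ltr_norml => /andP [_ h]; lra.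
have hse : (\sum_(k < K) (e / 2 / (K%:R + 1)) = e / 2 / (K%:R + 1) * K%:R)%R.
  by rewrite sumr_const card_ord mulr_natr.
rewrite big_split /= hse in h1.
have h3 : (e / 2 / (K%:R + 1) * K%:R <= e / 2)%R.
  rewrite mulrAC ler_pdivrMr // ler_wpM2l ?(ltW e2) //; lra.
have := dof_le ad' e2.
have -> : (\sum_(k < K) d k)%:E = ((\sum_(k < K) d k) - e)%:E + e%:E by rewrite -EFinD subrK.
move=> h; apply: leeD2r; apply: le_trans h; rewrite lee_fin; lra.
Qed.

End Part2.

Theorem theorem8 (K B : nat) (M : 'M[bool]_(K, B)) :
  (forall F : finFieldType,
     sum_capacity_NS F M * ((log2 (#|F|%:R))^-1)%:E <= ((minrk F M)%:R)%:E)
  /\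
  (forall Fq : nat -> finFieldType,
     (forall q : nat, prime_power q -> #|Fq q| = q) ->
     sum_dof_NS Fq M <= pp_liminf (fun q => ((minrk (Fq q) M)%:R : Rdefinitions.R))).
Proof.
split; first by move=> F; exact: part1.
by move=> Fq hc; exact: part2.
Qed.
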